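(* Let $k\geq 1$ and let $T$ and $T'$ be binary phylogenetic $X$-trees with $|X|=2k$. Let $P_1,\ldots,P_k$ and $P'_1,\ldots,P'_k$ be the unique sets of $k$ pairwise edge-disjoint leaf-to-leaf paths in $T$ and $T'$, respectively. Let $\mathcal{E}=\{\{a_i,b_i\}: a_i,b_i \text{ are the endpoints of } P_i,\ 1\le i\le k\}$ and $\mathcal{E}'=\{\{a'_i,b'_i\}: a'_i,b'_i \text{ are the endpoints of } P'_i,\ 1\le i\le k\}$. Then $A_k(T)=A_k(T')$ if and only if $\mathcal{E}=\mathcal{E}'$.
   Context: A phylogenetic $X$-tree is a tree with no vertices of degree 2 whose leaves are bijectively labelled by (and identified with) $X$; binary means maximum degree 3. A leaf-to-leaf path is a path whose two endpoints are (distinct) leaves. When $|X|=2k$, a binary phylogenetic $X$-tree contains exactly one set of $k$ pairwise edge-disjoint leaf-to-leaf paths. For a binary character $f: X\to\{a,b\}$, $l(f,T)$ is the minimum, over all maps $g:V(T)\to\{a,b\}$ with $g|_X=f$, of the number of edges $\{u,v\}$ with $g(u)\ne g(v)$; $A_k(T)$ is the set of all binary characters $f$ on $X$ with $l(f,T)=k$. *)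

(* Defs.v *)
From mathcomp Require Import all_boot.
Set Implicit Arguments.
Unset Strict Implicit.
Unset Printing Implicit Defensive.

Section Defs.
Variables (V : finType) (e : rel V).

Definition deg (v : V) : nat := #|[set w | e v w]|.

Definition acyclic : Prop :=
  forall s : seq V, uniq s -> 2 < size s -> ~~ cycle e s.

Definition is_tree : Prop :=
  symmetric e /\ irreflexive e /\ (forall u v, connect e u v) /\ acyclic.

Definition edges : {set {set V}} := [set [set p.1; p.2] | p in [set p : (V * V)%type | e p.1 p.2]].
End Defs.

Definition is_binary_phylo (X V : finType) (e : rel V) (phi : X -> V) : Prop :=
  is_tree e /\ injective phi /\
  (forall v, (deg e v == 1) = (v \in codom phi)) /\
  (forall v, deg e v != 2) /\ (forall v, deg e v <= 3).

Record btree (X : finType) := BTree {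
  tV : finType;
  tE : rel tV;
  tphi : X -> tV;
  tP : is_binary_phylo tE tphi }.
Arguments tV {X} b : rename.
Arguments tE {X} b _ _ : rename.
Arguments tphi {X} b _ : rename.

Section Parsimony.
Variables (X : finType) (T : btree X).

Definition changes (g : {ffun tV T -> bool}) : nat :=
  #|[set [set p.1; p.2] | p in [set p : (tV T * tV T)%type | tE T p.1 p.2 && (g p.1 != g p.2)]]|.

(* l(f,T): minimum number of changes over all extensions g of f
   (binary states a,b encoded as true,false).  The default value #|edges|
   is an upper bound on every 'changes g', so it never affects the minimum. *)
Definition parsimony (f : {ffun X -> bool}) : nat :=
  \big[minn/#|edges (tE T)|]_(g : {ffun tV T -> bool} | [forall x, g (tphi T x) == f x])
     changes g.

Definition A_ (k : nat) : {set {ffun X -> bool}} := [set f | parsimony f == k].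

Definition leaf_path (x y : X) (s : seq (tV T)) : bool :=
  [&& x != y, path (tE T) (tphi T x) s, last (tphi T x) s == tphi T y
    & uniq (tphi T x :: s)].

Definition path_edges (v0 : tV T) (s : seq (tV T)) : {set {set tV T}} :=
  [set:: [seq [set p.1; p.2] | p <- zip (v0 :: s) s]].

Definition path_system (k : nat) (a b : 'I_k -> X) (s : 'I_k -> seq (tV T)) : Prop :=
  (forall i, leaf_path (a i) (b i) (s i)) /\
  (forall i j, i != j ->
     [disjoint path_edges (tphi T (a i)) (s i) & path_edges (tphi T (a j)) (s j)]).

Definition endpoint_pairs (k : nat) (a b : 'I_k -> X) : {set {set X}} :=
  [set [set a i; b i] | i : 'I_k].
End Parsimony.
Arguments path_system {X} T {k} a b s.
Arguments leaf_path {X} T x y s.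

(* Main.v *)
Require Import Defs.
From mathcomp Require Import all_boot all_algebra zify.
Set Implicit Arguments.
Unset Strict Implicit.
Unset Printing Implicit Defensive.
Import GRing.Theory Num.Theory.


Lemma uniq_pathP (V : finType) (r : rel V) x y :
  connect r x y -> exists p, [/\ path r x p, uniq (x :: p) & last x p = y].
Proof.
move/connectP=> [p pp ->]; case: (shortenP pp) => p' pp' up' _.
by exists p'; split.
Qed.

Section Tree.
Variables (X : finType) (T : btree X).
Local Notation V := (tV T).
Local Notation e := (tE T).
Local Notation phi := (tphi T).

Lemma e_sym : symmetric e. Proof. by case: (tP T) => [[]]. Qed.
Lemma eirr : irreflexive e. Proof. by case: (tP T) => [[_ []]]. Qed.
Lemma econn u v : connect e u v. Proof. by case: (tP T) => [[_ [_ []]]]. Qed.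
Lemma eacyc : acyclic e. Proof. by case: (tP T) => [[_ [_ [_]]]]. Qed.
Lemma phi_inj : injective phi. Proof. by case: (tP T) => _ []. Qed.
Lemma deg1E v : (deg e v == 1) = (v \in codom phi). Proof. by case: (tP T) => _ [_ []]. Qed.
Lemma deg_not2 v : deg e v != 2. Proof. by case: (tP T) => _ [_ [_ []]]. Qed.
Lemma deg_le3 v : deg e v <= 3. Proof. by case: (tP T) => _ [_ [_ []]]. Qed.

Lemma e_neq u w : e u w -> u != w.
Proof. by apply: contraTneq => ->; rewrite eirr. Qed.

Lemma leaf_deg x : deg e (phi x) = 1.
Proof. by apply/eqP; rewrite deg1E codom_f. Qed.

Lemma deg1_uniq v w1 w2 : deg e v = 1 -> e v w1 -> e v w2 -> w1 = w2.
Proof.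
rewrite /deg => /eqP/cards1P [z hz] h1 h2.
have: w1 \in [set w | e v w] by rewrite inE.
have: w2 \in [set w | e v w] by rewrite inE.
by rewrite hz !inE => /eqP -> /eqP ->.
Qed.

Lemma leaf_uniq x w1 w2 : e (phi x) w1 -> e (phi x) w2 -> w1 = w2.
Proof. exact: deg1_uniq (leaf_deg x). Qed.

Definition eu (u : V) : rel V := [rel x y | [&& e x y, x != u & y != u]].
Definition B (u w : V) : {set V} := [set y | connect (eu u) w y].

Lemma euE u x y : eu u x y = [&& e x y, x != u & y != u]. Proof. by []. Qed.

Lemma eu_sym u : symmetric (eu u).
Proof. move=> x y; rewrite /eu /= e_sym; by case: (e y x); case: (x != u); case: (y != u). Qed.

Lemma path_eu_e u x p : path (eu u) x p -> path e x p.
Proof. by apply: sub_path => a b /andP []. Qed.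

Lemma path_eu_notin u x p : path (eu u) x p -> u \notin p.
Proof.
elim: p x => [//|y p IH] x /= /andP [/and3P [_ _ yu] pp].
by rewrite inE negb_or eq_sym yu (IH _ pp).
Qed.

Lemma path_e_eu u x p : path e x p -> x != u -> u \notin p -> path (eu u) x p.
Proof.
elim: p x => [//|y p IH] x /= /andP [exy pp] xu; rewrite inE negb_or => /andP [uy up].
by rewrite /= euE exy xu eq_sym uy IH // eq_sym.
Qed.

Lemma notin_B u w : e u w -> u \notin B u w.
Proof.
move=> euw; rewrite inE; apply/negP => /connectP [p pp def].
case: p pp def => [_ /= h|y p pp h]; first by move: (e_neq euw); rewrite h eqxx.
by have := path_eu_notin pp; rewrite h /= mem_last.
Qed.

Lemma in_B_neq u w y : e u w -> y \in B u w -> y != u.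
Proof. by move=> euw; apply: contraTneq => ->; apply: notin_B. Qed.

Lemma B_self u w : w \in B u w.
Proof. by rewrite inE connect0. Qed.

Lemma B_disj u w1 w2 y : e u w1 -> e u w2 -> w1 != w2 ->
  y \in B u w1 -> y \in B u w2 -> False.
Proof.
move=> e1 e2 n12; rewrite !inE => c1 c2.
have c12 : connect (eu u) w1 w2.
  by apply: connect_trans c1 _; rewrite (sym_connect_sym (@eu_sym u)).
have [p [pp up lp]] := uniq_pathP c12.
have pn : p != [::] by case: p pp up lp => [/= _ _ h|//]; move: n12; rewrite h eqxx.
have := eacyc (s := u :: w1 :: p).
have u1 : u != w1 by exact: e_neq e1.
have -> : uniq (u :: w1 :: p).
  rewrite cons_uniq up andbT inE negb_or u1 /=.
  exact: path_eu_notin pp.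
have -> : 2 < size (u :: w1 :: p) by case: p pn {pp up lp}.
rewrite /= rcons_path e1 (path_eu_e pp) lp e_sym e2.
by move=> /(_ isT isT).
Qed.

Lemma B_cover u y : y != u -> exists2 w, e u w & y \in B u w.
Proof.
move=> yu; have [p [pp up lp]] := uniq_pathP (econn u y).
case: p pp up lp => [/= _ _ h|w p]; first by move: yu; rewrite h eqxx.
move=> /= /andP [euw pp]; rewrite inE negb_or => /andP [/andP [uw up] _] lp.
exists w => //; rewrite inE; apply/connectP; exists p => //.
by apply: path_e_eu => //; rewrite eq_sym.
Qed.

Lemma B_leaf w l y : e w l -> deg e l = 1 -> y \in B w l -> y = l.
Proof.
move=> ewl dl; rewrite inE => /connectP [[|z p] //= /andP [/and3P [elz lw zw] _] _].
have : z = w by apply: deg1_uniq dl elz _; rewrite e_sym.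
by move=> h; move: zw; rewrite h eqxx.
Qed.

Lemma B_boundary u w y y' : e u w -> y \in B u w -> e y y' -> y' \notin B u w ->
  y = w /\ y' = u.
Proof.
move=> euw yB eyy' y'B.
have yu := in_B_neq euw yB.
have y'u : y' = u.
  apply/eqP; apply: contraNT y'B => y'u; move: yB; rewrite !inE => c.
  by apply: connect_trans c (connect1 _); rewrite euE eyy' yu y'u.
split=> //; apply/eqP; apply: contraNT y'B => yw; exfalso.
apply: (@B_disj u y w y _ euw yw (B_self _ _) yB).
by rewrite -y'u e_sym.
Qed.

Lemma B_compl u w y : e u w -> (y \in B u w) = (y \notin B w u).
Proof.
move=> euw; apply/idP/idP.
- move=> yB; apply/negP; rewrite inE => c.
  have yu := in_B_neq euw yB.
  have [p [pp up lp]] := uniq_pathP c.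
  case: p pp up lp => [/= _ _ h|w' p]; first by move: yu; rewrite h eqxx.
  move=> /= /andP [/and3P [euw' _ w'w] pp]; rewrite inE negb_or => /andP [/andP [uw' up] _] lp.
  apply: (B_disj euw' euw w'w _ yB); rewrite inE; apply/connectP; exists p => //.
  by apply: path_e_eu; [exact: path_eu_e pp| rewrite eq_sym|].
- move=> ynB; have [yu'|yu] := eqVneq y u.
    by move: ynB; rewrite yu' B_self.
  have [w' euw' yB'] := B_cover yu.
  have [<-//|w'w] := eqVneq w' w.
  move: yB'; rewrite inE => /connectP [p pp lp].
  have pw : forall z, z \in w' :: p -> z != w.
    move=> z zin; apply/negP => /eqP zw.
    apply: (B_disj euw' euw w'w (y := w) _ (B_self _ _)).
    by rewrite inE -zw; apply: path_connect pp _ zin.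
  exfalso; move/negP: ynB; apply; rewrite inE; apply/connectP.
  exists (w' :: p) => //; apply: path_e_eu.
  + by rewrite /= euw' (path_eu_e pp).
  + by rewrite e_neq.
  + by apply/negP => /pw; rewrite eqxx.
Qed.

Lemma B_path_const u w x p : e u w -> path e x p ->
  (forall q, q \in zip (x :: p) p -> [set q.1; q.2] != [set u; w]) ->
  (x \in B u w) = (last x p \in B u w).
Proof.
move=> euw; elim: p x => [//|y p IH] x /= /andP [exy pp] hz.
rewrite -IH //; last by move=> q qin; apply: hz; rewrite inE qin orbT.
have hxy : [set x; y] != [set u; w] by apply: (hz (x, y)); rewrite inE eqxx.
apply/idP/idP => [xB|yB]; apply/negPn/negP => nB.
- have [h1 h2] := B_boundary euw xB exy nB.
  by move: hxy; rewrite h1 h2 setUC eqxx.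
- have [h1 h2] := B_boundary euw yB (etrans (e_sym _ _) exy) nB.
  by move: hxy; rewrite h1 h2 eqxx.
Qed.
End Tree.

Lemma bigmin_le_seq (I : eqType) (r : seq I) (P : pred I) (F : I -> nat) idx i0 :
  i0 \in r -> P i0 -> \big[minn/idx]_(i <- r | P i) F i <= F i0.
Proof.
elim: r => [//|j r IH]; rewrite inE big_cons => /orP [/eqP <- ->|ir Pi].
  exact: geq_minl.
case: (P j); last exact: IH.
by apply: leq_trans (geq_minr _ _) (IH ir Pi).
Qed.

Section Pars.
Variables (X : finType) (T : btree X).
Local Notation V := (tV T).
Local Notation e := (tE T).
Local Notation phi := (tphi T).

Definition nb (v : V) : V := odflt v [pick w | e v w].

Lemma leaf_nb x : e (phi x) (nb (phi x)).
Proof.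
rewrite /nb; case: pickP => [//|h].
have := leaf_deg T x; rewrite /deg.
have -> : [set w | e (phi x) w] = set0 by apply/setP => w; rewrite !inE h.
by rewrite cards0.
Qed.

Lemma edge_leaf x w : e (phi x) w -> [set phi x; w] = [set phi x; nb (phi x)].
Proof. by move=> h; rewrite (leaf_uniq h (leaf_nb x)). Qed.

Definition chset (g : {ffun V -> bool}) : {set {set V}} :=
  [set [set p.1; p.2] | p in [set p : (V * V)%type | e p.1 p.2 && (g p.1 != g p.2)]].

Lemma changesE (g : {ffun V -> bool}) : changes g = #|chset g|. Proof. by []. Qed.

Lemma pars_le_changes (f : {ffun X -> bool}) (g : {ffun V -> bool}) : [forall x, g (phi x) == f x] -> parsimony T f <= changes g.
Proof. by move=> h; apply: bigmin_le_seq; rewrite ?mem_index_enum. Qed.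

Definition extf (f : {ffun X -> bool}) (c : {ffun V -> bool}) : {ffun V -> bool} :=
  [ffun v => if [pick x | phi x == v] is Some x then f x else c v].

Lemma extf_phi (f : {ffun X -> bool}) (c : {ffun V -> bool}) x : extf f c (phi x) = f x.
Proof.
rewrite ffunE; case: pickP => [y /eqP /phi_inj -> //|/(_ x)].
by rewrite eqxx.
Qed.

Lemma extf_ext (f : {ffun X -> bool}) (c : {ffun V -> bool}) : [forall x, extf f c (phi x) == f x].
Proof. by apply/forallP => x; rewrite extf_phi. Qed.

Lemma parsG (f : {ffun X -> bool}) (c : {ffun V -> bool}) :
  parsimony T f <= changes c + #|[set x | f x != c (phi x)]|.
Proof.
set g := extf f c.
have gc v : g v != c v -> exists x, v = phi x /\ f x != c (phi x).
  rewrite /g ffunE; case: pickP => [y /eqP <- h| _]; [by exists y | by rewrite eqxx].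
apply: leq_trans (pars_le_changes (extf_ext f c)) _.
rewrite !changesE.
set S := [set x | f x != c (phi x)].
apply: (@leq_trans #|chset c :|: [set [set phi x; nb (phi x)] | x in S]|).
  apply: subset_leq_card; apply/subsetP => E /imsetP [[p1 p2]]; rewrite inE /= => /andP [ep gp] ->.
  rewrite inE; have [cp|cp] := eqVneq (c p1) (c p2).
  - apply/orP; right.
    have : (g p1 != c p1) || (g p2 != c p2).
      apply/negPn/negP => /norP [/negPn /eqP h1 /negPn /eqP h2].
      by move: gp; rewrite h1 h2 cp eqxx.
    case/orP => [/gc [x [hx fx]] | /gc [x [hx fx]]]; apply/imsetP; exists x; rewrite ?inE //.
      by subst p1; apply: edge_leaf.
    by subst p2; rewrite setUC; apply: edge_leaf; rewrite e_sym.
  - apply/orP; left; apply/imsetP; exists (p1, p2) => //; by rewrite inE /= ep cp.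
apply: leq_trans (leq_card_setU _ _).1 _.
by rewrite leq_add2l leq_imset_card.
Qed.

Lemma parsK (f : {ffun X -> bool}) (beta : bool) : parsimony T f <= #|[set x | f x != beta]|.
Proof.
apply: leq_trans (parsG f [ffun _ => beta]) _.
rewrite changesE.
have -> : chset [ffun _ => beta] = set0.
  apply/setP => E; rewrite inE; apply/negP => /imsetP [p]; rewrite inE !ffunE eqxx.
  by rewrite andbF.
by rewrite cards0 add0n; apply: subset_leq_card; apply/subsetP => x; rewrite !inE ffunE.
Qed.

Lemma pars_le_half (f : {ffun X -> bool}) k : #|X| = 2 * k -> parsimony T f <= k.
Proof.
move=> hX.
have hc : #|[set x | f x != true]| + #|[set x | f x != false]| = 2 * k.
  rewrite -hX -(cardsC [set x | f x != true]); congr (_ + _).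
  by apply: eq_card => x; rewrite !inE; case: (f x).
case: (leqP #|[set x | f x != true]| k) => h.
  exact: leq_trans (parsK f true) h.
apply: leq_trans (parsK f false) _; lia.
Qed.

Lemma changes_le_edges (g : {ffun V -> bool}) : changes g <= #|edges e|.
Proof.
rewrite changesE; apply: subset_leq_card; apply: imsetS.
by apply/subsetP => p; rewrite !inE => /andP [].
Qed.

Lemma path_change (g : {ffun V -> bool}) x p : path e x p -> g x != g (last x p) ->
  exists2 q, q \in zip (x :: p) p & e q.1 q.2 && (g q.1 != g q.2).
Proof.
elim: p x => [/= x _|y p IH x]; first by rewrite eqxx.
rewrite /= => /andP [exy pp] gxl.
have [gxy|gxy] := eqVneq (g x) (g y).
  have gyl : g y != g (last y p) by rewrite -gxy.
  have [q qin hq] := IH y pp gyl.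
  by exists q => //; rewrite inE qin orbT.
by exists (x, y); rewrite ?inE ?eqxx //= exy gxy.
Qed.

Lemma mem_zip_nth (x0 x : V) p t : t < size p ->
  (nth x0 (x :: p) t, nth x0 p t) \in zip (x :: p) p.
Proof.
elim: p x t => [//|y p IH] x [|t] /= ht; first by rewrite inE eqxx.
by rewrite inE IH ?orbT.
Qed.

Lemma zip_path_e x p q : path e x p -> q \in zip (x :: p) p -> e q.1 q.2.
Proof.
elim: p x => [//|y p IH] x /= /andP [exy pp]; rewrite inE => /orP [/eqP -> //|].
exact: IH.
Qed.

End Pars.

Section LeafPath.
Variables (X : finType) (T : btree X) (x y : X) (s : seq (tV T)).
Hypothesis hp : leaf_path T x y s.
Local Notation V := (tV T).
Local Notation e := (tE T).
Local Notation phi := (tphi T).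

Definition vv t := nth (phi x) (phi x :: s) t.
Local Notation v := vv.
Local Notation m := (size s).

Lemma lp_xy : x != y. Proof. by case/and4P: hp. Qed.
Lemma lp_path : path e (phi x) s. Proof. by case/and4P: hp. Qed.
Lemma lp_last : last (phi x) s = phi y. Proof. by case/and4P: hp => _ _ /eqP. Qed.
Lemma lp_uniq : uniq (phi x :: s). Proof. by case/and4P: hp. Qed.

Lemma lp_m : 0 < m.
Proof.
case: s lp_last lp_xy => [/= /phi_inj ->|//]; by rewrite eqxx.
Qed.

Lemma lp_v0 : v 0 = phi x. Proof. by []. Qed.
Lemma lp_vm : v m = phi y.
Proof. by rewrite /vv -lp_last -[m]/((size (phi x :: s)).-1) nth_last. Qed.

Lemma lp_e t : t < m -> e (v t) (v t.+1).
Proof. by move=> ht; move/pathP: lp_path => /(_ (phi x) t ht). Qed.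

Lemma lp_inj t1 t2 : t1 <= m -> t2 <= m -> v t1 = v t2 -> t1 = t2.
Proof.
move=> h1 h2 /eqP; rewrite /vv nth_uniq ?lp_uniq //= ?ltnS //.
by move/eqP.
Qed.

Lemma lp_neq t1 t2 : t1 <= m -> t2 <= m -> t1 != t2 -> v t1 != v t2.
Proof. by move=> h1 h2; apply: contraNneq => /lp_inj ->. Qed.

Lemma lp_edge t : t < m -> [set v t; v t.+1] \in path_edges (phi x) s.
Proof.
move=> ht; rewrite /path_edges inE; apply/mapP.
by exists (v t, v t.+1) => //; apply: mem_zip_nth.
Qed.

Lemma lp_conn c i d : i + d <= m -> c <= m -> ~~ (i <= c <= i + d) ->
  connect (eu (v c)) (v i) (v (i + d)).
Proof.
elim: d => [|d IH] hm hc hn; first by rewrite addn0 connect0.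
apply: connect_trans (IH _ hc _) _; [lia | by apply: contra hn; lia |].
apply: connect1; rewrite euE addnS lp_e ?lp_neq //; lia.
Qed.

Lemma lp_interior t : 0 < t < m -> v t \notin codom phi /\
  exists z, [/\ e (v t) z, z != v t.-1, z != v t.+1 &
     forall w, e (v t) w -> [|| w == v t.-1, w == v t.+1 | w == z]].
Proof.
move=> /andP [t0 tm].
set N := [set w | e (v t) w].
have ha : v t.-1 \in N by rewrite inE e_sym -{2}(prednK t0) lp_e //; lia.
have hb : v t.+1 \in N by rewrite inE lp_e.
have hab : v t.-1 != v t.+1 by apply: lp_neq; lia.
have d2 : 2 <= #|N|.
  have := cards2 (v t.-1) (v t.+1); rewrite hab => <-.
  by rewrite subset_leq_card // subUset !sub1set ha hb.
have d3 : #|N| = 3.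
  by have := deg_not2 (v t); have := deg_le3 (v t); rewrite /deg -/N; lia.
split; first by rewrite -deg1E /deg -/N d3.
have : #|N :\ v t.-1 :\ v t.+1| = 1.
  move: d3; rewrite (cardsD1 (v t.-1)) ha (cardsD1 (v t.+1) (N :\ _)) !inE eq_sym hab (lp_e tm).
  by move=> h; lia.
move/eqP/cards1P => [z hz].
have : z \in N :\ v t.-1 :\ v t.+1 by rewrite hz set11.
rewrite !inE => /and3P [zb za ez].
exists z; split=> // w ew.
have [//|wa] := eqVneq w (v t.-1); have [//|wb] := eqVneq w (v t.+1).
have : w \in N :\ v t.-1 :\ v t.+1 by rewrite !inE wa wb ew.
by rewrite hz inE => ->; rewrite !orbT.
Qed.

Lemma lp_end_x : exists2 w, e (phi x) w & [set phi x; w] \in path_edges (phi x) s.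
Proof. exists (v 1); [exact: lp_e lp_m | exact: lp_edge lp_m]. Qed.

Lemma lp_end_y : exists2 w, e (phi y) w & [set phi y; w] \in path_edges (phi x) s.
Proof.
exists (v m.-1).
  by rewrite -lp_vm e_sym -{2}(prednK lp_m) lp_e // prednK // lp_m.
by rewrite setUC -lp_vm -{2}(prednK lp_m) lp_edge // prednK // lp_m.
Qed.

End LeafPath.

Section PS.
Variables (X : finType) (T : btree X) (k : nat) (a b : 'I_k -> X) (s : 'I_k -> seq (tV T)).
Hypothesis hps : path_system T a b s.
Hypothesis hX : #|X| = 2 * k.
Local Notation V := (tV T).
Local Notation e := (tE T).
Local Notation phi := (tphi T).
Local Notation PE i := (path_edges (phi (a i)) (s i)).

Lemma ps_lp i : leaf_path T (a i) (b i) (s i). Proof. by case: hps. Qed.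
Lemma ps_disj i j : i != j -> [disjoint PE i & PE j]. Proof. by case: hps => _; apply. Qed.
Lemma ps_ab i : a i != b i. Proof. exact: lp_xy (ps_lp i). Qed.

Lemma ps_end z i : (z == a i) || (z == b i) -> exists2 w, e (phi z) w & [set phi z; w] \in PE i.
Proof.
by case/orP => /eqP ->; [apply: lp_end_x (ps_lp i) | apply: lp_end_y (ps_lp i)].
Qed.

Lemma ps_end_uniq z i j : (z == a i) || (z == b i) -> (z == a j) || (z == b j) -> i = j.
Proof.
move=> hi hj; apply/eqP/negPn/negP => nij.
have [w1 e1 h1] := ps_end hi; have [w2 e2 h2] := ps_end hj.
by move: (disjointFr (ps_disj nij) h1); rewrite (leaf_uniq e1 e2) h2.
Qed.

Lemma ps_a_inj : injective a.
Proof. by move=> i j h; apply: (@ps_end_uniq (a i)); rewrite ?h eqxx. Qed.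
Lemma ps_b_inj : injective b.
Proof. by move=> i j h; apply: (@ps_end_uniq (b i)); rewrite ?h eqxx ?orbT. Qed.

Lemma ps_ab_disj : [disjoint [set a i | i : 'I_k] & [set b i | i : 'I_k]].
Proof.
rewrite disjoints_subset; apply/subsetP => z /imsetP [i _ ->]; rewrite inE.
apply/negP => /imsetP [j _ h].
have ij : i = j by apply: (@ps_end_uniq (a i)); rewrite ?h eqxx ?orbT.
by move: (ps_ab i); rewrite h ij eqxx.
Qed.

Lemma ps_ABT : [set a i | i : 'I_k] :|: [set b i | i : 'I_k] = setT.
Proof.
apply/eqP; rewrite eqEcard subsetT cardsT hX.
have := (leq_card_setU [set a i | i : 'I_k] [set b i | i : 'I_k]).2.
rewrite ps_ab_disj => /eqP ->.
by rewrite !card_imset ?card_ord; [lia | exact: ps_b_inj | exact: ps_a_inj].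
Qed.

Lemma ps_cover z : exists i, (z == a i) || (z == b i).
Proof.
have : z \in [set a i | i : 'I_k] :|: [set b i | i : 'I_k] by rewrite ps_ABT inE.
by rewrite inE => /orP [] /imsetP [i _ ->]; exists i; rewrite eqxx ?orbT.
Qed.

Lemma ps_sum (F : X -> int) : (\sum_x F x = \sum_i (F (a i) + F (b i)))%R.
Proof.
rewrite big_split /=.
rewrite (eq_bigl [predU [set a i | i : 'I_k] & [set b i | i : 'I_k]]); last first.
  by move=> z; rewrite /= -in_setU ps_ABT inE.
rewrite bigU ?ps_ab_disj // !big_imset //.
- by move=> i j _ _; apply: ps_b_inj.
- by move=> i j _ _; apply: ps_a_inj.
Qed.

End PS.

Lemma card_int (T : finType) (P : pred T) :
  (#|[set x | P x]|%:R : int) = (\sum_x (if P x then 1 else 0))%R.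
Proof.
rewrite -sum1_card natr_sum big_mkcond /=; apply: eq_bigr => x _; rewrite inE; by case: (P x).
Qed.

Lemma discrete (q : nat -> int) (sg : int) n : (sg = 1 \/ sg = -1)%R ->
  q 0%N = sg -> q n = (- sg)%R -> (forall t, (t <= n)%N -> q t = 1%R \/ q t = (-1)%R) ->
  exists t, [/\ (t < n)%N, q t = sg & q t.+1 = (- sg)%R].
Proof.
move=> hsg q0; elim: n => [|n IH] qn hq; first by rewrite q0 in qn; lia.
have [qs|qs] : q n = sg \/ q n = (- sg)%R.
  by have := hq n (leqnSn n); lia.
  by exists n; split.
have [t [tn h1 h2]] := IH qs (fun t ht => hq t (leqW ht)).
by exists t; split=> //; apply: leqW.
Qed.

Section Main.
Variables (X : finType) (T : btree X) (k : nat) (a b : 'I_k -> X) (s : 'I_k -> seq (tV T)).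
Hypothesis hps : path_system T a b s.
Hypothesis hX : #|X| = 2 * k.
Local Notation V := (tV T).
Local Notation e := (tE T).
Local Notation phi := (tphi T).
Local Notation PE i := (path_edges (phi (a i)) (s i)).

Lemma ch_lower (f : {ffun X -> bool}) (g : {ffun V -> bool}) :
  (forall i, f (a i) != f (b i)) -> [forall x, g (phi x) == f x] -> k <= changes g.
Proof.
move=> sep /forallP gf.
have hex : forall i, exists E, (E \in PE i) && (E \in chset g).
  move=> i; have lp := ps_lp hps i.
  have gl : g (phi (a i)) != g (last (phi (a i)) (s i)).
    by rewrite (lp_last lp) (eqP (gf _)) (eqP (gf _)) sep.
  have [[q1 q2] qin /andP [eq gq]] := path_change (lp_path lp) gl.
  exists [set q1; q2]; rewrite inE; apply/andP; split.
    by apply/mapP; exists (q1, q2).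
  by apply/imsetP; exists (q1, q2); rewrite // inE /= eq gq.
have [ch hch] := fin_all_exists hex.
have chinj : injective ch.
  move=> i j hij; apply/eqP/negPn/negP => nij.
  have /andP [hi _] := hch i; have /andP [hj _] := hch j.
  by move: (disjointFr (ps_disj hps nij) hi); rewrite hij hj.
rewrite changesE; apply: leq_trans (subset_leq_card (_ : [set ch i | i : 'I_k] \subset _)).
  by rewrite card_imset // card_ord.
by apply/subsetP => E /imsetP [i _ ->]; have /andP [] := hch i.
Qed.

Lemma pars_lower (f : {ffun X -> bool}) : (forall i, f (a i) != f (b i)) -> k <= parsimony T f.
Proof.
move=> sep; rewrite /parsimony; apply: (big_ind (fun n => k <= n)).
- exact: leq_trans (ch_lower sep (extf_ext f [ffun _ => false])) (changes_le_edges _).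
- by move=> x y hx hy; rewrite leq_min hx hy.
- by move=> g; apply: ch_lower.
Qed.

Section F.
Variable f : {ffun X -> bool}.
Definition hb x : int := if f x then 1%R else (-1)%R.
Definition dd (A : {set V}) : int := (\sum_x (if phi x \in A then hb x else 0))%R.

Lemma dd_compl (A A' : {set V}) : (forall x, (phi x \in A) = (phi x \notin A')) ->
  dd A = (\sum_x hb x - dd A')%R.
Proof.
move=> h; rewrite /dd -sumrB; apply: eq_bigr => x _; rewrite h.
by case: (phi x \in A'); rewrite ?subrr ?subr0.
Qed.

Lemma changes_B (u w : V) (al : bool) : e u w ->
  changes [ffun v => (v \in B u w) == al] <= 1.
Proof.
move=> euw; rewrite changesE -(cards1 [set u; w]); apply: subset_leq_card.
apply/subsetP => E /imsetP [[p1 p2]]; rewrite inE /= !ffunE => /andP [ep cp] ->.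
rewrite inE; apply/eqP.
case: (boolP (p1 \in B u w)) => h1; case: (boolP (p2 \in B u w)) => h2.
- by move: cp; rewrite h1 h2 eqxx.
- have [-> ->] := B_boundary euw h1 ep h2; exact: setUC.
- have [-> ->] := B_boundary euw h2 (etrans (e_sym _ _) ep) h1; by [].
- by move: cp; rewrite (negbTE h1) (negbTE h2) eqxx.
Qed.

Lemma nonsep_balanced (u w : V) : e u w ->
  #|[set x | f x != true]| = k -> #|[set x | f x != false]| = k ->
  (2 <= dd (B u w) \/ dd (B u w) <= -2)%R -> parsimony T f < k.
Proof.
move=> euw N1 N2 hd.
have key : forall al : bool,
  (#|[set x | f x != [ffun v => (v \in B u w) == al] (phi x)]|%:R : int) =
  (if al then #|[set x | f x != false]|%:R - dd (B u w) else
              #|[set x | f x != true]|%:R + dd (B u w))%R.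
  move=> al; rewrite !card_int /dd; case: al.
    rewrite -sumrB; apply: eq_bigr => x _; rewrite ffunE /hb.
    by case: (f x); case: (phi x \in B u w).
  rewrite -big_split; apply: eq_bigr => x _; rewrite ffunE /hb.
  by case: (f x); case: (phi x \in B u w).
case: hd => hd.
- have := key true; rewrite N2 => hk.
  have := parsG f [ffun v => (v \in B u w) == true]; have := changes_B true euw.
  lia.
- have := key false; rewrite N1 => hk.
  have := parsG f [ffun v => (v \in B u w) == false]; have := changes_B false euw.
  lia.
Qed.

End F.
End Main.

Section Branch.
Variables (X : finType) (T : btree X) (k : nat) (a b : 'I_k -> X) (s : 'I_k -> seq (tV T)).
Hypothesis hps : path_system T a b s.
Hypothesis hX : #|X| = 2 * k.
Local Notation V := (tV T).
Local Notation e := (tE T).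
Local Notation phi := (tphi T).
Local Notation PE i := (path_edges (phi (a i)) (s i)).

Lemma leafB (w : V) z x : e w (phi z) -> (phi x \in B w (phi z)) = (x == z).
Proof.
move=> ew; apply/idP/eqP => [h|->]; last exact: B_self.
exact: phi_inj (B_leaf ew (leaf_deg T z) h).
Qed.

Lemma B_excl (u w1 w2 y : V) : e u w1 -> e u w2 -> w1 != w2 -> y \in B u w1 -> (y \in B u w2) = false.
Proof. by move=> e1 e2 n12 h1; apply/negP => h2; apply: (B_disj e1 e2 n12 h1 h2). Qed.

Variable f : {ffun X -> bool}.
Variable i : 'I_k.
Hypothesis fab : f (a i) = f (b i).
Hypothesis tot : (\sum_x hb f x = 0)%R.

Let lp := ps_lp hps i.
Local Notation v := (vv (a i) (s i)).
Local Notation m := (size (s i)).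
Local Notation p t := (dd f (B (v t.+1) (v t))).

Lemma m0 : (0 < m)%N. Proof. exact: lp_m lp. Qed.

Lemma F0 : p 0%N = hb f (a i).
Proof.
rewrite /dd (bigD1 (a i)) //= lp_v0 leafB ?eqxx; last by rewrite e_sym (lp_e lp m0).
rewrite big1 ?addr0 // => x /negbTE xa; by rewrite leafB ?xa // e_sym (lp_e lp m0).
Qed.

Lemma Fm : p m.-1 = (- hb f (a i))%R.
Proof.
have em : e (v m) (v m.-1) by rewrite e_sym -{2}(prednK m0) (lp_e lp) // prednK // m0.
rewrite prednK ?m0 // (@dd_compl _ _ f _ (B (v m.-1) (v m))); last first.
  by move=> x; rewrite B_compl.
rewrite tot sub0r; congr (- _)%R.
rewrite /dd (bigD1 (b i)) //= (lp_vm lp) leafB ?eqxx; last by rewrite -(lp_vm lp) -e_sym.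
rewrite big1 ?addr0 /hb ?fab // => x /negbTE xb.
by rewrite leafB ?xb // -(lp_vm lp) -e_sym.
Qed.

Lemma Fodd t : (t < m)%N -> exists M : int, p t = (hb f (a i) + 2 * M)%R.
Proof.
move=> ht.
have eB : e (v t.+1) (v t) by rewrite e_sym (lp_e lp).
set Bt := B (v t.+1) (v t).
have ai : phi (a i) \in Bt.
  rewrite inE -(lp_v0 (a i) (s i)) (sym_connect_sym (@eu_sym _ _ _)).
  have := lp_conn lp (c := t.+1) (i := 0) (d := t); rewrite add0n; apply; lia.
have bi : phi (b i) \notin Bt.
  rewrite -(lp_vm lp); case: (ltnP t.+1 m) => h.
  - have e2 : e (v t.+1) (v t.+2) by apply: (lp_e lp).
    have hin : v m \in B (v t.+1) (v t.+2).
      rewrite inE; have := lp_conn lp (c := t.+1) (i := t.+2) (d := m - t.+2).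
      rewrite subnKC //; apply; lia.
    by rewrite (B_excl e2 eB _ hin) // (lp_neq lp); lia.
  - have -> : m = t.+1 by lia.
    exact: notin_B eB.
have hj : forall j, j != i -> (phi (a j) \in Bt) = (phi (b j) \in Bt).
  move=> j ji; rewrite -(lp_last (ps_lp hps j)); apply: B_path_const eB (lp_path (ps_lp hps j)) _.
  move=> q qin; apply/negP => /eqP hq.
  have h1 : [set q.1; q.2] \in PE j by rewrite inE; apply/mapP; exists q.
  have h2 : [set v t.+1; v t] \in PE i by rewrite setUC; apply: lp_edge.
  by move: (disjointFr (ps_disj hps ji) h1); rewrite hq h2.
pose half j : int := (if f (a j) && f (b j) then 1 else if ~~ f (a j) && ~~ f (b j) then -1 else 0)%R.
exists (\sum_(j | j != i) (if phi (a j) \in Bt then half j else 0))%R.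
rewrite /dd (ps_sum hps hX) (bigD1 i) //= ai (negbTE bi) addr0; congr (_ + _)%R.
rewrite mulr_sumr; apply: eq_bigr => j ji; rewrite -(hj j ji) /half /hb.
by case: (phi (a j) \in Bt); case: (f (a j)); case: (f (b j)); rewrite ?mulr0 ?addr0.
Qed.

Lemma Fstep t : (t.+1 < m)%N -> exists z, e (v t.+1) z /\ dd f (B (v t.+1) z) = (p t.+1 - p t)%R.
Proof.
move=> ht.
have [nc [z [ez z1 z2 hz]]] := lp_interior lp (t := t.+1) (ltac:(lia)).
rewrite /= in z1 hz.
exists z; split=> //.
have e1 : e (v t.+1) (v t) by rewrite e_sym (lp_e lp) //; lia.
have e2 : e (v t.+1) (v t.+2) by apply: (lp_e lp).
have d12 : v t != v t.+2 by rewrite (lp_neq lp); lia.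
have part : (\sum_x hb f x = dd f (B (v t.+1) (v t)) + dd f (B (v t.+1) (v t.+2))
                 + dd f (B (v t.+1) z))%R.
  rewrite /dd -!big_split; apply: eq_bigr => x _ /=.
  have xw : phi x != v t.+1 by apply/eqP => h; move: nc; rewrite -h codom_f.
  have [w' ew' hin] := B_cover xw.
  have := hz w' ew'; case/or3P => /eqP hw; subst w'.
  - by rewrite hin (B_excl e1 e2 d12 hin) (B_excl e1 ez _ hin) ?addr0 // eq_sym.
  - by rewrite hin (B_excl e2 e1 _ hin) ?(B_excl e2 ez _ hin) ?addr0 ?add0r // eq_sym.
  - by rewrite hin (B_excl ez e1 z1 hin) (B_excl ez e2 z2 hin) ?add0r.
have hc : p t.+1 = (\sum_x hb f x - dd f (B (v t.+1) (v t.+2)))%R.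
  apply: dd_compl => x; rewrite B_compl //; by rewrite e_sym.
move: part hc; rewrite tot; lia.
Qed.

Lemma branch_exists : exists u w, e u w /\ (2 <= dd f (B u w) \/ dd f (B u w) <= -2)%R.
Proof.
have hsg : (hb f (a i) = 1 \/ hb f (a i) = -1)%R by rewrite /hb; case: (f (a i)); [left|right].
case: (boolP [exists t : 'I_m, (2 <= p t)%R || (p t <= -2)%R]).
  case/existsP => t /orP h; exists (v t.+1), (v t); split.
    by rewrite e_sym (lp_e lp).
  by case: h; [left|right].
rewrite negb_exists => /forallP hall.
have hq : forall t, (t <= m.-1)%N -> p t = 1%R \/ p t = (-1)%R.
  move=> t ht; have tm : (t < m)%N by have := m0; lia.
  have := hall (Ordinal tm); rewrite /= negb_or -!real_ltNge ?num_real // => /andP [h1 h2].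
  have [M hM] := Fodd tm; lia.
have [t [tn h1 h2]] := discrete hsg F0 Fm hq.
have [z [ez hz]] := Fstep (t := t) (ltac:(have := m0; lia)).
exists (v t.+1), z; split => //; rewrite hz h1 h2; lia.
Qed.

End Branch.

Lemma charA (X : finType) (T : btree X) (k : nat) (a b : 'I_k -> X) (s : 'I_k -> seq (tV T)) :
  #|X| = 2 * k -> path_system T a b s ->
  forall f, (f \in A_ T k) = [forall i, f (a i) != f (b i)].
Proof.
move=> hX hps f; rewrite inE; apply/eqP/forallP => [hk i|sep].
- apply/negP => /eqP fab; move: hk; apply/eqP; rewrite neq_ltn; apply/orP; left.
  set N1 := #|[set x | f x != true]|; set N2 := #|[set x | f x != false]|.
  have hc : N1 + N2 = 2 * k.
    rewrite -hX -(cardsC [set x | f x != true]); congr (_ + _).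
    by apply: eq_card => x; rewrite !inE; case: (f x).
  case: (ltnP N1 k) => h1; first exact: leq_ltn_trans (parsK T f true) _.
  case: (ltnP N2 k) => h2; first exact: leq_ltn_trans (parsK T f false) _.
  have e1 : N1 = k by lia.
  have e2 : N2 = k by lia.
  have tot : (\sum_x hb f x = 0)%R.
    have -> : (\sum_x hb f x = (N2%:R : int) - N1%:R)%R.
      rewrite !card_int -sumrB; apply: eq_bigr => x _; rewrite /hb; by case: (f x).
    by rewrite e1 e2 subrr.
  have [u [w [euw hd]]] := branch_exists hps hX fab tot.
  have := nonsep_balanced hX euw e1 e2 hd. done.
- apply/eqP; rewrite eqn_leq pars_le_half //.
  exact: (pars_lower hps sep).
Qed.

Lemma pair_sep (X : finType) (x y x' y' : X) (f : X -> bool) : x' != y' ->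
  [set x'; y'] = [set x; y] -> f x != f y -> f x' != f y'.
Proof.
move=> nxy h.
have : x' \in [set x; y] by rewrite -h set21.
have : y' \in [set x; y] by rewrite -h set22.
rewrite !inE => /orP [] /eqP hy /orP [] /eqP hx; subst x' y';
  idtac; first [done | by rewrite eq_sym | by rewrite eqxx in nxy].
Qed.

Section Comb.
Variables (X : finType) (k : nat) (a b a' b' : 'I_k -> X).
Hypothesis U' : forall z i j, (z == a' i) || (z == b' i) -> (z == a' j) || (z == b' j) -> i = j.
Hypothesis D' : forall i, a' i != b' i.
Hypothesis C' : forall z, exists i, (z == a' i) || (z == b' i).
Hypothesis D : forall i, a i != b i.

Lemma incl : (forall f : {ffun X -> bool}, [forall i, f (a i) != f (b i)] = [forall i, f (a' i) != f (b' i)]) ->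
  endpoint_pairs a b \subset endpoint_pairs a' b'.
Proof.
move=> hS; apply/subsetP => E /imsetP [i _ ->].
have [j hj] := C' (a i).
case: (boolP ((b i == a' j) || (b i == b' j))) => hbj.
  apply/imsetP; exists j => //.
  have := D i; have := D' j.
  case/orP: hj => /eqP ->; case/orP: hbj => /eqP ->; rewrite ?eqxx // => _ _.
  exact: setUC.
exfalso.
pose inP z j := (z == a' j) || (z == b' j).
pose f := [ffun x => [|| x == a i, x == b i |
                     [exists j', (x == a' j') && ~~ (inP (a i) j' || inP (b i) j')]]].
have fa : f (a i) by rewrite ffunE eqxx.
have fb : f (b i) by rewrite ffunE eqxx orbT.
have fo : forall y j', inP y j' -> inP (a i) j' || inP (b i) j' -> y != a i -> y != b i -> f y = false.
  move=> y j' hy hc ya yb; rewrite ffunE (negbTE ya) (negbTE yb) /=.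
  apply/existsP => [[j'' /andP [/eqP yj'' hn]]].
  have jj : j'' = j' by apply: (U' (z := y)); rewrite // yj'' eqxx.
  by move: hn; rewrite jj hc.
have hbj' : ~~ inP (b i) j by [].
have hRHS : [forall i, f (a' i) != f (b' i)].
  apply/forallP => j'.
  case: (boolP (inP (a i) j' || inP (b i) j')) => hc.
  - have notboth : ~~ (((a' j' == a i) || (a' j' == b i)) && ((b' j' == a i) || (b' j' == b i))).
      apply/negP => /andP [h1 h2].
      have hj' : inP (a i) j' || inP (b i) j' -> inP (a i) j'.
        move=> _; rewrite /inP.
        case/orP: h1 => /eqP e1; case/orP: h2 => /eqP e2.
        - by rewrite -e1 eqxx.
        - by rewrite -e1 eqxx.
        - by rewrite -e2 eqxx orbT.
        - by move: (D' j'); rewrite e1 e2 eqxx.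
      have jj : j' = j by apply: (U' (z := a i)); [apply: hj' hc | exact: hj].
      move: hbj'; rewrite -jj /inP.
      case/orP: h1 => /eqP e1; case/orP: h2 => /eqP e2.
      - by move: (D' j'); rewrite e1 e2 eqxx.
      - by rewrite -e2 eqxx orbT.
      - by rewrite -e1 eqxx.
      - by move: (D' j'); rewrite e1 e2 eqxx.
    have [h1|h1] := boolP ((a' j' == a i) || (a' j' == b i)).
    + rewrite (@fo (b' j') j') ?/inP ?eqxx ?orbT //.
      * by case/orP: h1 => /eqP ->; rewrite ?fa ?fb.
      * by apply: contra notboth => h; rewrite h1 h.
      * by apply: contra notboth => h; rewrite h1 h orbT.
    + have h2 : (b' j' == a i) || (b' j' == b i).
        move: hc; rewrite /inP; move: h1; rewrite negb_or => /andP [n1 n2].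
        by rewrite ![_ == a' j']eq_sym ![_ == b' j']eq_sym (negbTE n1) (negbTE n2).
      rewrite (@fo (a' j') j') ?/inP ?eqxx //.
      * by case/orP: h2 => /eqP ->; rewrite ?fa ?fb.
      * by apply: contra h1 => ->.
      * by apply: contra h1 => ->; rewrite orbT.
  - have fa' : f (a' j').
      rewrite ffunE; apply/orP; right; apply/orP; right.
      by apply/existsP; exists j'; rewrite eqxx.
    have fb' : f (b' j') = false.
      move: hc; rewrite /inP !negb_or => /andP [/andP [n1 n2] /andP [n3 n4]].
      rewrite ffunE ![b' j' == _]eq_sym (negbTE n2) (negbTE n4) /=.
      apply/existsP => [[j'' /andP [/eqP yj'' _]]].
      have jj : j'' = j' by apply: (U' (z := b' j')); rewrite // yj'' eqxx ?orbT.
      by rewrite jj in yj''; move: (D' j'); rewrite -yj'' eqxx.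
    by rewrite fa' fb'.
have := hS f; rewrite hRHS => /forallP /(_ i).
by rewrite fa fb.
Qed.
End Comb.

Theorem proposition5 (k : nat) (X : finType) (T T' : btree X)
    (a b : 'I_k -> X) (s : 'I_k -> seq (tV T))
    (a' b' : 'I_k -> X) (s' : 'I_k -> seq (tV T')) :
  1 <= k -> #|X| = 2 * k ->
  path_system T a b s -> path_system T' a' b' s' ->
  (A_ T k = A_ T' k <-> endpoint_pairs a b = endpoint_pairs a' b').
Proof.
move=> _ hX hps hps'.
have eA : A_ T k = [set f : {ffun X -> bool} | [forall i, f (a i) != f (b i)]].
  by apply/setP => f; rewrite (charA hX hps) inE.
have eA' : A_ T' k = [set f : {ffun X -> bool} | [forall i, f (a' i) != f (b' i)]].
  by apply/setP => f; rewrite (charA hX hps') inE.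
rewrite eA eA'; split.
- move=> h.
  have hS : forall f : {ffun X -> bool},
      [forall i, f (a i) != f (b i)] = [forall i, f (a' i) != f (b' i)].
    by move=> f; move/setP: h => /(_ f); rewrite !inE.
  apply/eqP; rewrite eqEsubset; apply/andP; split.
  + exact: (incl (ps_end_uniq hps') (ps_ab hps') (ps_cover hps' hX) (ps_ab hps) hS).
  + exact: (incl (ps_end_uniq hps) (ps_ab hps) (ps_cover hps hX) (ps_ab hps')
              (fun f => esym (hS f))).
- move=> hE; apply/setP => f; rewrite !inE; apply/forallP/forallP => h i'.
  + have : [set a' i'; b' i'] \in endpoint_pairs a b by rewrite hE; apply: imset_f.
    case/imsetP => i _ eq; exact: pair_sep (ps_ab hps' i') eq (h i).
  + have : [set a i'; b i'] \in endpoint_pairs a' b' by rewrite -hE; apply: imset_f.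
    case/imsetP => i _ eq; exact: pair_sep (ps_ab hps i') eq (h i).
Qed.
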